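(* Let $n\ge2$ be an integer and write $n-1=\sum_{i=0}^m p_i2^i$ with $p_i\in\{0,1\}$ and $p_m=1$; let $I=\{i\mid p_i=1\}$. In the standard MV-algebra $[0,1]_{\text{Ł}}$, the system of equations $y_0=\neg x$, $y_j=y_{j-1}^2$ for $j=1,\dots,m$, and $x=\prod_{i\in I}y_i$ has a unique solution, and in it $x=1/n$.
   Context: Standard MV-algebra $[0,1]_{\text{Ł}}$: domain $[0,1]$, $x\cdot y=\max(0,x+y-1)$, $\neg x=1-x$. Powers $y^2=y\cdot y$ and the product $\prod$ refer to the operation $\cdot$. *)

(* Defs.v *)
From Stdlib Require Import Reals Lra Lia Arith List.
Open Scope R_scope.

Definition luk_mul (x y : R) : R := Rmax 0 (x + y - 1).
Definition luk_neg (x : R) : R := 1 - x.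

Definition luk_prod (l : list R) : R := fold_right luk_mul 1 l.

(* Binary expansion of k = n-1 >= 1: k = sum_{i=0}^m p_i 2^i, p_m = 1,
   so m = Nat.log2 k and p_i = Nat.testbit k i. *)
Definition top_index (k : nat) : nat := Nat.log2 k.
Definition bit_set (k : nat) : list nat :=
  filter (fun i => Nat.testbit k i) (seq 0 (S (top_index k))).

Definition lsystem (n : nat) (x : R) (y : nat -> R) : Prop :=
  let k := (n - 1)%nat in
  let m := top_index k in
  (0 <= x <= 1) /\
  (forall j, (j <= m)%nat -> 0 <= y j <= 1) /\
  y 0%nat = luk_neg x /\
  (forall j, (1 <= j <= m)%nat -> y j = luk_mul (y (j - 1)%nat) (y (j - 1)%nat)) /\
  x = luk_prod (map y (bit_set k)).

(* Main.v *)
Require Import Defs.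
From Stdlib Require Import Reals Lra Lia Arith List.
Open Scope R_scope.

Fixpoint sp (l : list nat) : nat :=
  match l with nil => 0%nat | i :: l' => (2 ^ i + sp l')%nat end.

Lemma sp_filter_map (p : nat -> bool) (l : list nat) :
  sp (filter p (map S l)) = (2 * sp (filter (fun i => p (S i)) l))%nat.
Proof.
  induction l as [|a l IH]; simpl; [lia|].
  destruct (p (S a)); simpl; rewrite IH; lia.
Qed.

Lemma sp_bits (N k : nat) :
  sp (filter (Nat.testbit k) (seq 0 N)) = (k mod 2 ^ N)%nat.
Proof.
  revert k; induction N as [|N IH]; intros k.
  - simpl. cbn. lia.
  - simpl seq. rewrite <- seq_shift. cbn [filter].
    rewrite Nat.pow_succ_r', Nat.Div0.mod_mul_r.
    assert (H2 : sp (filter (Nat.testbit k) (map S (seq 0 N))) = (2 * ((k/2) mod 2^N))%nat).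
    { rewrite sp_filter_map. rewrite <- IH. f_equal. f_equal.
      apply filter_ext. intros i. simpl. rewrite Nat.div2_div. reflexivity. }
    pose proof (Nat.bit0_mod k) as Hb.
    set (r := (k mod 2)%nat) in *. set (q := ((k/2) mod 2^N)%nat) in *.
    destruct (Nat.testbit k 0) eqn:Ht; cbn [Nat.b2n] in Hb; cbn [sp]; rewrite H2; change (2^0)%nat with 1%nat; lia.
Qed.

Lemma sp_bit_set (k : nat) : (0 < k)%nat -> sp (bit_set k) = k.
Proof.
  intros Hk. unfold bit_set, top_index. rewrite sp_bits.
  apply Nat.mod_small. apply Nat.log2_spec. exact Hk.
Qed.

Lemma pow2_pos (j : nat) : 0 < 2 ^ j.
Proof. apply pow_lt. lra. Qed.

Lemma luk_step (a x : R) : 0 < a -> 0 <= x ->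
  luk_mul (Rmax 0 (1 - a * x)) (Rmax 0 (1 - a * x)) = Rmax 0 (1 - 2 * a * x).
Proof.
  intros Ha Hx. unfold luk_mul, Rmax.
  repeat (destruct Rle_dec); nra.
Qed.

Lemma luk_list (x : R) (L : list nat) : 0 <= x ->
  luk_prod (map (fun i => Rmax 0 (1 - 2 ^ i * x)) L) = Rmax 0 (1 - x * INR (sp L)).
Proof.
  intros Hx. induction L as [|i L IH].
  - simpl. unfold Rmax. destruct Rle_dec; lra.
  - simpl map. unfold luk_prod in *. simpl fold_right. rewrite IH.
    simpl sp. rewrite plus_INR, pow_INR. simpl INR.
    pose proof (pos_INR (sp L)). pose proof (pow2_pos i).
    assert (0 <= x * INR (sp L)) by nra.
    assert (0 <= x * 2 ^ i) by nra.
    replace (2 ^ i * x) with (x * 2 ^ i) by ring.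
    replace (1 + 1) with 2 by ring.
    unfold luk_mul, Rmax. repeat (destruct Rle_dec); nra.
Qed.

Lemma y_formula n x y : lsystem n x y ->
  forall j, (j <= top_index (n - 1))%nat -> y j = Rmax 0 (1 - 2 ^ j * x).
Proof.
  intros (Hx & Hy & H0 & Hrec & Hp).
  induction j as [|j IH]; intros Hj.
  - rewrite H0. unfold luk_neg, Rmax. simpl. destruct Rle_dec; lra.
  - rewrite Hrec by lia. replace (S j - 1)%nat with j by lia.
    rewrite IH by lia. rewrite luk_step by (try apply pow2_pos; lra).
    replace (2 * 2 ^ j * x) with (2 ^ S j * x) by (simpl; ring); reflexivity.
Qed.

Lemma x_value n x y : (2 <= n)%nat -> lsystem n x y -> x = 1 / INR n.
Proof.
  intros hn Hs. pose proof (y_formula n x y Hs) as Hf.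
  destruct Hs as (Hx & Hy & H0 & Hrec & Hp).
  rewrite (map_ext_in _ (fun i => Rmax 0 (1 - 2 ^ i * x))) in Hp.
  2:{ intros a Ha. apply Hf. unfold bit_set in Ha.
      apply filter_In in Ha. destruct Ha as [Ha _]. apply in_seq in Ha. lia. }
  rewrite luk_list in Hp by lra.
  rewrite sp_bit_set in Hp by lia.
  assert (En : INR n = 1 + INR (n - 1)).
  { replace n with (S (n-1)) at 1 by lia. rewrite S_INR. ring. }
  pose proof (pos_INR (n-1)).
  revert Hp. unfold Rmax. destruct Rle_dec; intros Hp.
  - rewrite En. field_simplify_eq; [nra| lra].
  - nra.
Qed.

Theorem lemma4p1 (n : nat) (hn : (2 <= n)%nat) :
  (exists x y, lsystem n x y) /\
  (forall x y x' y', lsystem n x y -> lsystem n x' y' ->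
     x = x' /\ forall j, (j <= top_index (n - 1))%nat -> y j = y' j) /\
  (forall x y, lsystem n x y -> x = 1 / INR n).
Proof.
  split; [|split].
  - set (x := 1 / INR n).
    assert (Hn : 2 <= INR n) by (apply (le_INR 2); exact hn).
    assert (Hx : 0 <= x <= 1) by (unfold x; split;
      [apply Rmult_le_pos; [lra| left; apply Rinv_0_lt_compat; lra]
      | apply (Rmult_le_reg_r (INR n)); [lra|]; field_simplify; lra]).
    exists x, (fun j => Rmax 0 (1 - 2 ^ j * x)).
    split; [exact Hx|]. split; [|split; [|split]].
    + intros j _. pose proof (pow2_pos j).
      unfold Rmax; destruct Rle_dec; nra.
    + simpl. unfold luk_neg, Rmax. destruct Rle_dec; lra.
    + intros j Hj. rewrite luk_step by (try apply pow2_pos; lra).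
      destruct j as [|j]; [lia|]. replace (S j - 1)%nat with j by lia.
      replace (2 * 2 ^ j * x) with (2 ^ S j * x) by (simpl; ring); reflexivity.
    + rewrite luk_list by lra. rewrite sp_bit_set by lia.
      assert (En : INR n = 1 + INR (n - 1)).
      { replace n with (S (n-1)) at 1 by lia. rewrite S_INR. ring. }
      unfold Rmax. destruct Rle_dec.
      * unfold x. rewrite En. pose proof (pos_INR (n-1)). field. lra.
      * exfalso. unfold x in n0. rewrite En in n0.
        pose proof (pos_INR (n-1)).
        assert (1 - 1 / (1 + INR (n - 1)) * INR (n - 1) = 1 / (1 + INR (n-1))) by (field; lra).
        assert (0 < 1 / (1 + INR (n - 1))) by (apply Rdiv_lt_0_compat; lra).
        apply n0; lra.
  - intros x y x' y' H H'.
    pose proof (x_value n x y hn H). pose proof (x_value n x' y' hn H').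
    split; [congruence|].
    intros j Hj. rewrite (y_formula n x y H j Hj), (y_formula n x' y' H' j Hj).
    congruence.
  - intros x y H. exact (x_value n x y hn H).
Qed.
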